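(* Let $Y$ be a topological space such that $\mathrm{H}_1([0,1],Y)\subseteq \mathrm{B}_1([0,1],Y)$. Then $Y$ is almost arcwise connected.
   Context: $\mathrm{H}_1(X,Y)$: mappings $f:X\to Y$ with $f^{-1}(V)$ an $F_\sigma$-set for every open $V\subseteq Y$. $\mathrm{B}_1(X,Y)$: pointwise limits of sequences of continuous mappings $X\to Y$. A space $Y$ is almost arcwise connected if for each pair of nonempty open sets $U,V\subseteq Y$ there is a continuous $\gamma:[0,1]\to Y$ with $\gamma(0)\in U$ and $\gamma(1)\in V$ (an arc in $Y$ joining $U$ and $V$). *)

(* Defs.v *)
From Stdlib Require Import Reals.
Open Scope R_scope.

Record TopSpace := {
  carrier :> Type;
  is_open : (carrier -> Prop) -> Prop;
  open_full : is_open (fun _ => True);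
  open_inter : forall U V, is_open U -> is_open V -> is_open (fun y => U y /\ V y);
  open_union : forall F : (carrier -> Prop) -> Prop,
      (forall U, F U -> is_open U) -> is_open (fun y => exists U, F U /\ U y);
  open_ext : forall U V, is_open U -> (forall y, U y <-> V y) -> is_open V
}.

Definition I01 : Type := { x : R | 0 <= x <= 1 }.

Definition I01_open (U : I01 -> Prop) : Prop :=
  forall x : I01, U x -> exists eps : R, eps > 0 /\
    forall y : I01, Rabs (proj1_sig y - proj1_sig x) < eps -> U y.

Definition I01_closed (A : I01 -> Prop) : Prop :=
  I01_open (fun x => ~ A x).

Definition F_sigma (A : I01 -> Prop) : Prop :=
  exists F : nat -> I01 -> Prop,
    (forall n, I01_closed (F n)) /\
    (forall x, A x <-> exists n, F n x).

Definition I01_zero : I01 := exist _ 0 (conj (Rle_refl 0) Rle_0_1).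
Definition I01_one : I01 := exist _ 1 (conj Rle_0_1 (Rle_refl 1)).

Definition continuous_I (Y : TopSpace) (f : I01 -> Y) : Prop :=
  forall V : Y -> Prop, is_open Y V -> I01_open (fun x => V (f x)).

Definition H1_class (Y : TopSpace) (f : I01 -> Y) : Prop :=
  forall V : Y -> Prop, is_open Y V -> F_sigma (fun x => V (f x)).

Definition seq_converges (Y : TopSpace) (u : nat -> Y) (l : Y) : Prop :=
  forall V : Y -> Prop, is_open Y V -> V l ->
    exists N : nat, forall n, (N <= n)%nat -> V (u n).

Definition B1_class (Y : TopSpace) (f : I01 -> Y) : Prop :=
  exists fn : nat -> I01 -> Y,
    (forall n, continuous_I Y (fn n)) /\
    (forall x, seq_converges Y (fun n => fn n x) (f x)).

Definition almost_arcwise_connected (Y : TopSpace) : Prop :=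
  forall U V : Y -> Prop,
    is_open Y U -> (exists u, U u) ->
    is_open Y V -> (exists v, V v) ->
    exists gamma : I01 -> Y,
      continuous_I Y gamma /\ U (gamma I01_zero) /\ V (gamma I01_one).

(* Main.v *)
Require Import Defs.
From Stdlib Require Import Reals Lra Lia Classical.
Open Scope R_scope.

Lemma closed_or (A B : I01 -> Prop) :
  I01_closed A -> I01_closed B -> I01_closed (fun x => A x \/ B x).
Proof.
  intros HA HB x Hx.
  destruct (HA x (fun h => Hx (or_introl h))) as [e1 [He1 H1]].
  destruct (HB x (fun h => Hx (or_intror h))) as [e2 [He2 H2]].
  exists (Rmin e1 e2). split. apply Rmin_glb_lt; lra.
  intros y Hy [Ay|By].
  - apply (H1 y); [|exact Ay]. pose proof (Rmin_l e1 e2); lra.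
  - apply (H2 y); [|exact By]. pose proof (Rmin_r e1 e2); lra.
Qed.

Lemma closed_and_prop (P : Prop) (C : I01 -> Prop) :
  I01_closed C -> I01_closed (fun x => P /\ C x).
Proof.
  intros HC x Hx. destruct (classic P) as [p|np].
  - destruct (HC x (fun h => Hx (conj p h))) as [e [He H]].
    exists e. split; auto. intros y Hy [_ Cy]. exact (H y Hy Cy).
  - exists 1. split; [lra|]. intros y _ [py _]. exact (np py).
Qed.

Lemma closed_le (a : R) : I01_closed (fun x => proj1_sig x <= a).
Proof.
  intros x Hx. exists (proj1_sig x - a). split; [lra|].
  intros y Hy Hya. apply Rabs_def2 in Hy. lra.
Qed.

Lemma closed_eq1 : I01_closed (fun x => proj1_sig x = 1).
Proof.
  intros x Hx. destruct x as [x [h0 h1]]; simpl in *.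
  exists (1 - x). split; [lra|].
  intros y Hy Hya. apply Rabs_def2 in Hy. lra.
Qed.

Theorem mainTheorem9 (Y : TopSpace) :
  (forall f : I01 -> carrier Y, H1_class Y f -> B1_class Y f) -> almost_arcwise_connected Y.
Proof.
  intros HB U V HU [u Uu] HV [v Vv].
  set (f := fun x : I01 => if Req_EM_T (proj1_sig x) 1 then v else u).
  assert (Hf : H1_class Y f).
  { intros W HW.
    exists (fun n x => (W u /\ proj1_sig x <= 1 - / (INR n + 2))
                    \/ (W v /\ proj1_sig x = 1)).
    split.
    - intros n. apply closed_or; apply closed_and_prop.
      apply closed_le. apply closed_eq1.
    - intros x. unfold f. destruct x as [x [h0 h1]]; simpl.
      destruct (Req_EM_T x 1) as [e|ne].
      + split.
        * intros Wv. exists 0%nat. right. auto.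
        * intros [n [[_ Hn]|[Wv _]]]; auto.
          exfalso. assert (0 < / (INR n + 2)).
          { apply Rinv_0_lt_compat. pose proof (pos_INR n). lra. }
          lra.
      + split.
        * intros Wu. destruct (archimed_cor1 (1 - x)) as [N [HN HN0]]; [lra|].
          exists N. left. split; auto.
          assert (0 < INR N) by (apply lt_0_INR; lia).
          assert (/ (INR N + 2) < / INR N).
          { apply Rinv_lt_contravar; [nra|lra]. }
          lra.
        * intros [n [[Wu _]|[_ E]]]; auto. contradiction. }
  destruct (HB f Hf) as [fn [Hc Hconv]].
  destruct (Hconv I01_zero U HU) as [N1 HN1].
  { unfold f; simpl. destruct (Req_EM_T 0 1); [lra|exact Uu]. }
  destruct (Hconv I01_one V HV) as [N2 HN2].
  { unfold f; simpl. destruct (Req_EM_T 1 1); [exact Vv|lra]. }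
  exists (fn (max N1 N2)). split; [apply Hc|]. split.
  - apply HN1. lia.
  - apply HN2. lia.
Qed.
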